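(* Let $U$ be a finite set and let $d$ be an $\alpha$-relaxed semi-metric distance on $U$ for some $\alpha \ge 1$. Then for any two disjoint subsets $X, Y \subseteq U$, $$\alpha\,(|X|-1)\,d(X,Y) \;\ge\; |Y|\, d(X).$$
   Context: An $\alpha$-relaxed semi-metric distance on $U$ (with $\alpha\ge 1$) is a function $d:U\times U\to\mathbb{R}_{\ge 0}$ with $d(u,v)=d(v,u)$, $d(u,u)=0$, satisfying the relaxed triangle inequality $d(u,v)\le \alpha\,(d(v,w)+d(w,u))$ for all $u,v,w\in U$. For $S\subseteq U$, $d(S)=\sum_{\{u,v\}\subseteq S,\,u\neq v} d(u,v)$ (sum over unordered pairs). For disjoint $S,T\subseteq U$, $d(S,T)=d(S\cup T)-d(S)-d(T)=\sum_{s\in S,\,t\in T} d(s,t)$. *)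

(* Defs.v *)
From mathcomp Require Import all_boot all_order all_algebra.
Set Implicit Arguments. Unset Strict Implicit. Unset Printing Implicit Defensive.
Import Order.TTheory GRing.Theory Num.Theory.
Local Open Scope ring_scope.

Definition relaxed_semimetric (R : realFieldType) (U : finType)
  (alpha : R) (d : U -> U -> R) : Prop :=
  [/\ forall u v, 0 <= d u v,
      forall u v, d u v = d v u,
      forall u, d u u = 0 &
      forall u v w, d u v <= alpha * (d v w + d w u)].

(* d(S): sum over unordered pairs {u,v} of distinct elements of S; each
   unordered pair is counted once via the canonical enumeration order. *)
Definition dset (R : realFieldType) (U : finType) (d : U -> U -> R)
  (S : {set U}) : R :=
  \sum_(p in setX S S | (enum_rank p.1 < enum_rank p.2)%N) d p.1 p.2.

Definition dset2 (R : realFieldType) (U : finType) (d : U -> U -> R)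
  (S T : {set U}) : R :=
  dset d (S :|: T) - dset d S - dset d T.

(* Main.v *)
Require Import Defs.
From mathcomp Require Import all_boot all_order all_algebra.
From mathcomp Require Import ring lra.
Import Order.TTheory GRing.Theory Num.Theory.
Local Open Scope ring_scope.

Section Aux.
Variables (R : realFieldType) (U : finType) (d : U -> U -> R).
Hypothesis dsym : forall u v, d u v = d v u.
Hypothesis d0 : forall u, d u u = 0.

Definition DD (S : {set U}) := \sum_(x in S) \sum_(y in S) d x y.

Lemma dsetE S : dset d S =
  \sum_(x in S) \sum_(y in S | (enum_rank x < enum_rank y)%N) d x y.
Proof.
rewrite /dset pair_big_dep; apply: eq_bigl => -[a b].
by rewrite /= in_setX andbA.
Qed.

Lemma DD_dset S : DD S = dset d S *+ 2.
Proof.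
rewrite /DD.
have -> : \sum_(x in S) \sum_(y in S) d x y =
  \sum_(x in S) \sum_(y in S) ((if (enum_rank x < enum_rank y)%N then d x y else 0)
     + (if (enum_rank y < enum_rank x)%N then d x y else 0)).
  apply: eq_bigr => x _; apply: eq_bigr => y _.
  case: ltngtP => h; rewrite ?addr0 ?add0r //.
  by move/val_inj/enum_rank_inj: h => ->; rewrite d0.
under eq_bigr do rewrite big_split /=.
rewrite big_split /= mulr2n; congr (_ + _).
  by rewrite dsetE; apply: eq_bigr => x _; rewrite big_mkcondr.
rewrite exchange_big dsetE /=; apply: eq_bigr => x _; rewrite big_mkcondr.
by apply: eq_bigr => y _; rewrite dsym.
Qed.

Lemma bigU2 (X Y : {set U}) (F : U -> R) : [disjoint X & Y] ->
  \sum_(i in X :|: Y) F i = \sum_(i in X) F i + \sum_(i in Y) F i.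
Proof.
move=> dis; rewrite -bigU //; apply: eq_bigl => i; by rewrite !inE.
Qed.

Lemma DD_U (X Y : {set U}) : [disjoint X & Y] ->
  DD (X :|: Y) = DD X + DD Y + (\sum_(x in X) \sum_(y in Y) d x y) *+ 2.
Proof.
move=> dis; rewrite /DD bigU2 //.
under eq_bigr do rewrite bigU2 //.
rewrite big_split /=.
under [\sum_(i in Y) _]eq_bigr do rewrite bigU2 //.
rewrite [\sum_(i in Y) (_ + _)]big_split /=.
have -> : \sum_(i in Y) \sum_(i0 in X) d i i0 = \sum_(x in X) \sum_(y in Y) d x y.
  rewrite exchange_big; apply: eq_bigr => x _; apply: eq_bigr => y _; exact: dsym.
rewrite mulr2n; lra.
Qed.

End Aux.

Theorem lemma1 (R : realFieldType) (U : finType) (alpha : R)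
  (d : U -> U -> R) (X Y : {set U}) :
  1 <= alpha ->
  relaxed_semimetric alpha d ->
  [disjoint X & Y] ->
  alpha * ((#|X|%:R - 1) * dset2 d X Y) >= #|Y|%:R * dset d X.
Proof.
move=> ha [dpos dsym d0 tri] dis.
set C := \sum_(x in X) \sum_(y in Y) d x y.
have e2 : dset2 d X Y = C.
  have h := @DD_U _ _ d dsym X Y dis.
  rewrite !(@DD_dset _ _ d dsym d0) -/C in h.
  rewrite /dset2; move: h; rewrite !mulr2n; lra.
rewrite e2.
set c := fun x => \sum_(y in Y) d x y.
have key : #|Y|%:R * @DD _ _ d X <= alpha * ((#|X|%:R - 1) * C) *+ 2.
  have -> : @DD _ _ d X = \sum_(x in X) \sum_(x' in X :\ x) d x x'.
    rewrite /DD; apply: eq_bigr => x xX; rewrite (big_setD1 x) //= d0 add0r //.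
  rewrite mulr_sumr.
  have step1 : \sum_(i in X) #|Y|%:R * \sum_(x' in X :\ i) d i x' <=
      \sum_(x in X) \sum_(x' in X :\ x) alpha * (c x + c x').
    apply: ler_sum; move=> x _; rewrite mulr_sumr; apply: ler_sum; move=> x' _.
    rewrite /c -big_split /= mulr_sumr mulr_natl -sumr_const.
    apply: ler_sum; move=> y _; rewrite addrC (dsym x y); exact: tri.
  apply: le_trans step1 _.
  have -> : \sum_(x in X) \sum_(x' in X :\ x) alpha * (c x + c x') =
     alpha * (\sum_(x in X) (c x * (#|X|%:R - 1) + (C - c x))).
    rewrite mulr_sumr; apply: eq_bigr => x xX.
    rewrite -mulr_sumr big_split /= sumr_const.
    have hc : \sum_(i in X :\ x) c i = C - c x.
      rewrite /C /c [in RHS](big_setD1 x) //=; lra.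
    rewrite hc; congr (_ * (_ + _)).
    move: (cardsD1 x X); rewrite xX => ->.
    rewrite -mulr_natr natrD /=; lra.
  rewrite big_split /= -mulr_suml sumrB sumr_const.
  have hC : \sum_(i in X) c i = C by [].
  rewrite hC -mulr_natr mulr2n le_eqVlt; apply/orP; left; apply/eqP; ring.
rewrite (@DD_dset _ _ d dsym d0) in key.
move: key; rewrite -mulrnAr mulr2n; lra.
Qed.
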